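(* Let $L$ be a regular pseudocomplemented de Morgan algebra with dual $pm$-space $P$, and let $n<\omega$. Then $L$ is of range $n$ if and only if $P$ is of $\zeta$-width $n$.
   Context: A $pm$-algebra is $(L;\wedge,\vee,{}^\ast,{}^\prime,0,1)$ with bounded distributive lattice reduct, pseudocomplement ${}^\ast$ and de Morgan involution ${}^\prime$; it is regular if any two congruences sharing a class are equal. With $x^{0(\prime\ast)}=x$, $x^{(k+1)(\prime\ast)}=((x^{k(\prime\ast)})')^\ast$, $L$ is of range $n$ if $(x\wedge x^{\prime\ast})^{n(\prime\ast)}=(x\wedge x^{\prime\ast})^{(n+1)(\prime\ast)}$ for all $x\in L$. The dual $pm$-space $(P;\tau,\le,\zeta)$ is the Priestley space of prime ideals with order-reversing involution $\zeta(I)=\{a:a'\notin I\}$. $\ell(x,y)$ is the comparability-graph distance in $(P;\le)$ ($0$ if $x=y$, $\infty$ if not connected); $\ell_\zeta(x,y)=\min\{\ell(x,y),\ell(x,\zeta(y))\}$. $P$ is of $\zeta$-width $n$ if for all $x,y\in P$ with $\ell_\zeta(x,y)$ finite one has $\ell_\zeta(x,y)\le n$. *)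

(* Defs.v *)
From HB Require Import structures.
From mathcomp Require Import all_boot all_order.
Set Implicit Arguments. Unset Strict Implicit. Unset Printing Implicit Defensive.
Import Order.TTheory.
Local Open Scope order_scope.

Section PMAlgebra.
Context {disp : Order.disp_t} {L : tbDistrLatticeType disp}.

Definition is_pm_algebra (star neg : L -> L) : Prop :=
  (forall x y : L, x `&` y = \bot <-> y <= star x) /\
  (forall x y : L, neg (x `&` y) = neg x `|` neg y) /\
  (forall x : L, neg (neg x) = x).

Definition pm_congruence (star neg : L -> L) (th : L -> L -> Prop) : Prop :=
  (forall x, th x x) /\ (forall x y, th x y -> th y x) /\
  (forall x y z, th x y -> th y z -> th x z) /\
  (forall x y u v, th x y -> th u v -> th (x `&` u) (y `&` v)) /\
  (forall x y u v, th x y -> th u v -> th (x `|` u) (y `|` v)) /\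
  (forall x y, th x y -> th (star x) (star y)) /\
  (forall x y, th x y -> th (neg x) (neg y)).

Definition pm_regular (star neg : L -> L) : Prop :=
  forall th1 th2, pm_congruence star neg th1 -> pm_congruence star neg th2 ->
    (exists a, forall b, th1 a b <-> th2 a b) ->
    forall x y, th1 x y <-> th2 x y.

Definition negstar (star neg : L -> L) (x : L) : L := star (neg x).

Definition pm_range (star neg : L -> L) (n : nat) : Prop :=
  forall x : L,
    iter n (negstar star neg) (x `&` negstar star neg x)
    = iter n.+1 (negstar star neg) (x `&` negstar star neg x).

(* prime ideals (points of the dual pm-space), as predicates on L *)
Definition prime_ideal (I : L -> Prop) : Prop :=
  I \bot /\ ~ I \top /\
  (forall x y, I y -> x <= y -> I x) /\
  (forall x y, I x -> I y -> I (x `|` y)) /\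
  (forall x y, I (x `&` y) -> I x \/ I y).

Definition zeta (neg : L -> L) (I : L -> Prop) : L -> Prop :=
  fun a => ~ I (neg a).

Definition same_pt (I J : L -> Prop) : Prop := forall a, I a <-> J a.

Definition comparable_pt (I J : L -> Prop) : Prop :=
  (forall a, I a -> J a) \/ (forall a, J a -> I a).

(* walk k I J  <->  l(I,J) <= k in the comparability graph of P *)
Fixpoint walk (k : nat) (I J : L -> Prop) : Prop :=
  match k with
  | 0 => same_pt I J
  | k'.+1 => walk k' I J \/
             exists K, prime_ideal K /\ walk k' I K /\ comparable_pt K J
  end.

Definition lzeta_le (neg : L -> L) (k : nat) (I J : L -> Prop) : Prop :=
  walk k I J \/ walk k I (zeta neg J).

Definition zeta_width (neg : L -> L) (n : nat) : Prop :=
  forall I J, prime_ideal I -> prime_ideal J ->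
    (exists k, lzeta_le neg k I J) -> lzeta_le neg n I J.

End PMAlgebra.

(* Main.v *)
Require Import Defs.
From HB Require Import structures.
From mathcomp Require Import all_boot all_order.
From mathcomp Require Import boolp classical_sets.
From mathcomp Require Import zify.
Set Implicit Arguments. Unset Strict Implicit. Unset Printing Implicit Defensive.
Import Order.TTheory.
Local Open Scope order_scope.

Lemma nnpp (P : Prop) : ~ ~ P -> P.
Proof. by case: (pselect P) => // h []. Qed.

Section Alg.
Context {disp : Order.disp_t} {L : tbDistrLatticeType disp}.
Context (star neg : L -> L) (hpm : is_pm_algebra star neg).

Let starP : forall x y : L, x `&` y = \bot <-> y <= star x.
Proof. by case: hpm. Qed.
Let negM : forall x y : L, neg (x `&` y) = neg x `|` neg y.
Proof. by case: hpm => _ []. Qed.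
Let negK : forall x : L, neg (neg x) = x.
Proof. by case: hpm => _ []. Qed.

Lemma eq_bot (x : L) : x <= \bot -> x = \bot.
Proof. by move=> h; apply/le_anti; rewrite h le0x. Qed.

Lemma meet_star (x : L) : x `&` star x = \bot.
Proof. by apply/starP. Qed.

Lemma star_meet (x : L) : star x `&` x = \bot.
Proof. by rewrite meetC meet_star. Qed.

Lemma star_anti (x y : L) : x <= y -> star y <= star x.
Proof.
move=> h; apply/starP/eq_bot.
by rewrite -(meet_star y); apply: leI2.
Qed.

Lemma le_starstar (x : L) : x <= star (star x).
Proof. by apply/starP; rewrite star_meet. Qed.

Lemma star_bot : star \bot = \top.
Proof. by apply/le_anti; rewrite lex1 /=; apply/starP; rewrite meet0x. Qed.

Lemma star_top : star \top = \bot.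
Proof. by rewrite -(meet1x (star \top)) meet_star. Qed.

Lemma meet_bot_ss (u v : L) : u `&` v = \bot -> u `&` star (star v) = \bot.
Proof.
move=> h; apply/starP; apply: star_anti; apply/starP; by rewrite meetC.
Qed.

Lemma starJ (x y : L) : star (x `|` y) = star x `&` star y.
Proof.
apply/le_anti; rewrite lexI !star_anti ?leUl ?leUr //=.
apply/starP; rewrite meetUl; apply/eq_bot; rewrite leUx; apply/andP; split.
  by rewrite meetA meet_star meet0x.
by rewrite meetCA meet_star meetx0.
Qed.

Lemma star_le_bot (x : L) : star x = \top -> x = \bot.
Proof. by move=> h; rewrite -(meetx1 x) -h meet_star. Qed.

Lemma negJ (x y : L) : neg (x `|` y) = neg x `&` neg y.
Proof. by rewrite -{1}(negK x) -{1}(negK y) -negM negK. Qed.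

Lemma neg_anti (x y : L) : x <= y -> neg y <= neg x.
Proof. by move=> /meet_idPl h; rewrite -h negM leUr. Qed.

Lemma neg_bot : neg \bot = \top.
Proof.
apply/le_anti; rewrite lex1 /=; rewrite -{1}(negK \top); apply: neg_anti; exact: le0x.
Qed.

Lemma neg_top : neg \top = \bot.
Proof. by rewrite -neg_bot negK. Qed.

Definition ff := negstar star neg.
Lemma ffE x : ff x = star (neg x). Proof. by []. Qed.

Lemma ff_mono (x y : L) : x <= y -> ff x <= ff y.
Proof. by move=> h; rewrite !ffE; apply/star_anti/neg_anti. Qed.

Lemma ffff_le (x : L) : ff (ff x) <= x.
Proof.
rewrite !ffE; set c := star (neg x).
have h1 : x `|` neg c = \top.
  by rewrite -{1}(negK x) -negM meet_star neg_bot.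
rewrite -[star (neg c)]meetx1 -h1 meetUr [star (neg c) `&` neg c]meetC meet_star joinx0.
exact: leIr.
Qed.

Lemma iter_mono n (x y : L) : x <= y -> iter n ff x <= iter n ff y.
Proof. by elim: n => //= n IH h; apply/ff_mono/IH. Qed.

Definition bb (x : L) := x `&` ff x.

Lemma bb_mono (x y : L) : x <= y -> bb x <= bb y.
Proof. by move=> h; apply: leI2 => //; apply: ff_mono. Qed.

Lemma ff_bb (x : L) : ff (bb x) <= bb x.
Proof.
rewrite /bb ffE negM starJ -!ffE meetC; apply: leI2 => //; exact: ffff_le.
Qed.

Lemma iter_bb_dec n (x : L) : iter n.+1 ff (bb x) <= iter n ff (bb x).
Proof. elim: n => [|n IH]; first exact: ff_bb. by rewrite iterS [X in _ <= X]iterS ff_mono. Qed.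

Lemma iter_bb_decn m n (x : L) : m <= n -> iter n ff (bb x) <= iter m ff (bb x).
Proof.
move=> /subnK <-; elim: (n - m) => [|k IH]; first by rewrite add0n.
by rewrite addSn; apply: le_trans IH; apply: iter_bb_dec.
Qed.

Lemma iter_pad m (x : L) : iter m.+2 ff x <= iter m ff x.
Proof. by rewrite -addn2 iterD; apply: iter_mono; exact: ffff_le. Qed.

Lemma star_meet_ss (a c : L) : star (a `&` c) = star (star (star a) `&` star (star c)).
Proof.
apply/le_anti/andP; split; last by apply/star_anti/leI2; apply: le_starstar.
set t := star (a `&` c).
have h0 : t `&` c `&` a = \bot by rewrite meetAC -meetA star_meet.
have h1 := meet_bot_ss h0.
have h2 : t `&` star (star a) `&` c = \bot by rewrite meetAC.
have h3 := meet_bot_ss h2.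
by apply/starP; rewrite meetC meetA.
Qed.


Lemma dense_meet (d e : L) : star d = \bot -> star (d `&` e) = star e.
Proof.
move=> hd; rewrite star_meet_ss hd star_bot meet1x.
apply/le_anti/andP; split; last exact: le_starstar.
by apply: star_anti; apply: le_starstar.
Qed.

Definition Phi (x y : L) : Prop := star x = star y /\ star (neg x) = star (neg y).

Lemma Phi_cong : pm_congruence star neg Phi.
Proof.
rewrite /Phi; split; first by [].
split; first by move=> x y [-> ->].
split; first by move=> x y z [-> ->] [-> ->].
split.
  move=> x y u v [h1 h2] [h3 h4]; split.
    by rewrite star_meet_ss h1 h3 -star_meet_ss.
  by rewrite !negM !starJ h2 h4.
split.
  move=> x y u v [h1 h2] [h3 h4]; split.
    by rewrite !starJ h1 h3.
  by rewrite !negJ star_meet_ss h2 h4 -star_meet_ss.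
split.
  by move=> x y [h1 h2]; split; rewrite h1.
by move=> x y [h1 h2]; split; rewrite ?negK.
Qed.

Lemma eq_cong : pm_congruence star neg (@eq L).
Proof.
split; first by [].
split; first by move=> x y ->.
split; first by move=> x y z -> ->.
split; first by move=> x y u v -> ->.
split; first by move=> x y u v -> ->.
split; first by move=> x y ->.
by move=> x y ->.
Qed.

Lemma regular_V : pm_regular star neg ->
  forall x y : L, x `&` neg (ff x) <= y `|` star y.
Proof.
move=> hreg x y.
have key : forall a c, Phi a c -> a = c.
  move=> a c hac; apply: (proj1 (hreg _ _ Phi_cong eq_cong _ a c)) hac.
  exists \bot => b; split; last by move=> <-.
  by move=> [h _]; apply/esym/star_le_bot; rewrite -h star_bot.
set c := y `|` star y.
have hc : star c = \bot by rewrite starJ meet_star.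
have := key ((x `&` neg (ff x)) `|` c) c.
have hac : c <= (x `&` neg (ff x)) `|` c by exact: leUr.
move=> /(_ _) <-; first exact: leUl.
split.
  rewrite hc; apply/eq_bot; rewrite -hc; exact: star_anti.
rewrite negJ negM negK dense_meet //.
by rewrite ffE starJ meet_star.
Qed.

Lemma pt_ext (I J : L -> Prop) : (forall a, I a <-> J a) -> I = J.
Proof. by move=> h; apply: funext => a; apply: propext. Qed.

Section Prime.
Variable I : L -> Prop.
Hypothesis hI : prime_ideal I.
Lemma pr_bot : I \bot. Proof. by case: hI. Qed.
Lemma pr_top : ~ I \top. Proof. by case: hI => _ []. Qed.
Lemma pr_down x y : I y -> x <= y -> I x. Proof. by case: hI => _ [_ []] h _; apply: h. Qed.
Lemma pr_join x y : I x -> I y -> I (x `|` y). Proof. by case: hI => _ [_ [_ [h _]]]; apply: h. Qed.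
Lemma pr_meet x y : I (x `&` y) -> I x \/ I y. Proof. by case: hI => _ [_ [_ [_ h]]]; apply: h. Qed.
Lemma pr_meetl x y : I x -> I (x `&` y). Proof. by move=> h; apply: pr_down h _; exact: leIl. Qed.
Lemma pr_meetr x y : I y -> I (x `&` y). Proof. by move=> h; apply: pr_down h _; exact: leIr. Qed.
Lemma pr_joinl x y : I (x `|` y) -> I x. Proof. by move=> h; apply: pr_down h _; exact: leUl. Qed.
Lemma pr_joinr x y : I (x `|` y) -> I y. Proof. by move=> h; apply: pr_down h _; exact: leUr. Qed.
End Prime.

Notation zt := (zeta neg).

Lemma zeta_prime I : prime_ideal I -> prime_ideal (zt I).
Proof.
move=> hI; rewrite /zeta; split; first by rewrite neg_bot; exact: (pr_top hI).
split; first by rewrite neg_top => h; apply: h; exact: (pr_bot hI).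
split; first by move=> x y hy hxy hx; apply: hy; apply: (pr_down hI hx); exact: neg_anti.
split; first by move=> x y hx hy; rewrite negJ => /(pr_meet hI) [].
move=> x y; rewrite negM => h.
case: (pselect (I (neg x))) => hx; last by left.
case: (pselect (I (neg y))) => hy; last by right.
by case: h; apply: (pr_join hI).
Qed.

Lemma zetaK I : zt (zt I) = I.
Proof. apply: pt_ext => a; rewrite /zeta negK; split; [exact: nnpp | by move=> h []]. Qed.

Lemma zeta_anti (I K : L -> Prop) : (forall a, I a -> K a) -> forall a, zt K a -> zt I a.
Proof. by move=> h a; rewrite /zeta => hk hi; apply: hk; apply: h. Qed.

Definition Rl (I K : L -> Prop) := forall a, zt I a -> K a.

Lemma Rl_easy I K a : prime_ideal K -> Rl I K -> K a -> I (ff a).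
Proof.
move=> hK hR ha; apply: nnpp => hn.
have h1 : K (neg (ff a)) by apply: hR; rewrite /zeta negK.
apply: (pr_top hK).
have -> : \top = a `|` neg (ff a) by rewrite ffE -{1}(negK a) -negM meet_star neg_bot.
exact: (pr_join hK).
Qed.

Lemma Rl_zeta I : Rl I (zt I). Proof. by []. Qed.

Lemma Rl_sym I K : Rl I K -> Rl K I.
Proof.
move=> h a; rewrite /zeta => hk; apply: nnpp => hi; apply: hk; apply: h.
by rewrite /zeta negK.
Qed.

Lemma sub_Rl I K : (forall a, I a -> K a) -> Rl (zt I) K.
Proof. by move=> h a; rewrite zetaK; apply: h. Qed.

Lemma Rl_sub I K : Rl I K -> forall a, zt K a -> I a.
Proof. by move=> h; apply: (Rl_sym h). Qed.

Lemma pit (Id F : L -> Prop) :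
  Id \bot -> (forall x y, Id y -> x <= y -> Id x) ->
  (forall x y, Id x -> Id y -> Id (x `|` y)) ->
  F \top -> (forall x y, F x -> x <= y -> F y) ->
  (forall x y, F x -> F y -> F (x `&` y)) ->
  (forall x, Id x -> ~ F x) ->
  exists K, prime_ideal K /\ (forall x, Id x -> K x) /\ (forall x, F x -> ~ K x).
Proof.
move=> Ib Id_d Id_j Ft F_u F_m IF.
pose Good (X : L -> Prop) :=
  [/\ (forall x y, X y -> x <= y -> X x), (forall x y, X x -> X y -> X (x `|` y)),
    (forall y, Id y -> X y) & (forall y, X y -> ~ F y)].
pose P (X : set L) := (forall y, ~ X y) \/ Good X.
have [A [PA Amax]] : exists A : set L, P A /\ (forall B : set L, (A `<` B)%classic -> ~ P B).
  apply: Zorn_bigcup => C CP Ctot.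
  case: (pselect (exists X, C X /\ Good X)) => [[X0 [CX0 GX0]]|hne]; last first.
    left => y [X CX Xy].
    case: (CP X CX) => [h|h]; first exact: (h y).
    by apply: hne; exists X.
  have gd : forall X, C X -> forall y, X y -> Good X.
    by move=> X CX y Xy; case: (CP X CX) => // h; case: (h y).
  right; split.
  - move=> x y [X CX Xy] hxy; exists X => //.
    by case: (gd X CX y Xy) => h _ _ _; apply: h Xy hxy.
  - move=> x y [X CX Xx] [Y CY Yy].
    case: (Ctot X Y CX CY) => hs.
      exists Y => //; case: (gd Y CY y Yy) => _ h _ _; apply: h => //; exact: hs.
    exists X => //; case: (gd X CX x Xx) => _ h _ _; apply: h => //; exact: hs.
  - move=> y Iy; exists X0 => //; by case: GX0 => _ _ h _; apply: h.
  - move=> y [X CX Xy]; by case: (gd X CX y Xy) => _ _ _ h; apply: h.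
have GId : Good Id.
  split => //; by [].
have GA : Good A.
  case: PA => // hA; exfalso; apply: (Amax Id); last by right.
  split; first by move=> y /hA.
  by move=> h; apply: (hA \bot); apply: h.
case: GA => Ad Aj AId AF.
exists A; split; last by split => // x Fx Ax; apply: (AF x).
split; first exact: AId.
split; first by move=> At; exact: (AF _ At Ft).
split; first exact: Ad.
split; first exact: Aj.
move=> x y Axy; apply: nnpp => hn.
have hx : ~ A x by move=> h; apply: hn; left.
have hy : ~ A y by move=> h; apply: hn; right.
have ext : forall z, ~ A z -> exists a t, A a /\ F t /\ t <= a `|` z.
  move=> z hz; apply: nnpp => hne.
  pose B (t : L) := exists a, A a /\ t <= a `|` z.
  apply: (Amax B).
    split; first by move=> t At; exists t; split => //; exact: leUl.
    by move=> h; apply: hz; apply: h; exists \bot; split; [exact: AId | rewrite join0x].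
  right; split.
  - by move=> t u [a [Aa hu]] htu; exists a; split => //; apply: le_trans htu hu.
  - move=> t u [a [Aa ht]] [b [Ab hu]]; exists (a `|` b); split; first exact: Aj.
    rewrite leUx; apply/andP; split.
      apply: le_trans ht _; apply: leU2 => //; exact: leUl.
    apply: le_trans hu _; apply: leU2 => //; exact: leUr.
  - by move=> t It; exists t; split; [exact: AId | exact: leUl].
  - by move=> t [a [Aa ht]] Ft'; apply: hne; exists a, t.
have [a [t [Aa [Ft1 h1]]]] := ext x hx.
have [b [u [Ab [Fu1 h2]]]] := ext y hy.
have Fm := F_m _ _ Ft1 Fu1.
have hle : t `&` u <= (a `|` b) `|` (x `&` y).
  apply: le_trans (leI2 h1 h2) _.
  rewrite joinIr; apply: leI2.
    by apply: leU2 => //; exact: leUl.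
  by apply: leU2 => //; exact: leUr.
apply: (AF _ _ Fm); apply: (Ad _ _ _ hle).
exact: (Aj _ _ (Aj _ _ Aa Ab) Axy).
Qed.

Lemma separation (a c : L) : ~ (a <= c) ->
  exists K, prime_ideal K /\ K c /\ ~ K a.
Proof.
move=> hac.
have [K [hK [h1 h2]]] : exists K, prime_ideal K /\ (forall x, x <= c -> K x) /\
    (forall x, a <= x -> ~ K x).
  apply: pit.
- exact: le0x.
- by move=> x y hy hxy; apply: le_trans hxy hy.
- by move=> x y hx hy; rewrite leUx hx hy.
- exact: lex1.
- by move=> x y hx hxy; apply: le_trans hx hxy.
- by move=> x y hx hy; rewrite lexI hx hy.
- by move=> x hx hax; apply: hac; apply: le_trans hax hx.
by exists K; split => //; split; [apply: h1 | apply: h2].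
Qed.

Definition directed (D : L -> Prop) :=
  forall d1 d2, D d1 -> D d2 -> exists d, [/\ D d, d1 <= d & d2 <= d].

Lemma step I D : prime_ideal I -> directed D -> (forall d, D d -> I (ff d)) ->
  exists K, [/\ prime_ideal K, Rl I K & forall d, D d -> K d].
Proof.
move=> hI hD hDI.
have hzI := zeta_prime hI.
pose Id y := exists z, zt I z /\ (y <= z \/ exists d, D d /\ y <= z `|` d).
have [K [hK [h1 h2]]] : exists K, prime_ideal K /\ (forall x, Id x -> K x) /\
    (forall x, \top <= x -> ~ K x).
  apply: pit.
- by exists \bot; split; [exact: (pr_bot hzI) | left].
- move=> x y [z [hz [h|[d [Dd h]]]]] hxy; exists z; split => //.
    by left; apply: le_trans h.
  by right; exists d; split => //; apply: le_trans h.
- move=> x y [z [hz hx]] [z' [hz' hy]].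
  exists (z `|` z'); split; first exact: (pr_join hzI).
  case: hx => [hx|[d [Dd hx]]]; case: hy => [hy|[d' [Dd' hy]]].
  + by left; apply: leU2.
  + right; exists d'; split => //; rewrite leUx; apply/andP; split.
      exact: (le_trans hx (le_trans (leUl z z') (leUl _ d'))).
    exact: (le_trans hy (leU2 (leUr z' z) (lexx d'))).
  + right; exists d; split => //; rewrite leUx; apply/andP; split.
      exact: (le_trans hx (leU2 (leUl z z') (lexx d))).
    exact: (le_trans hy (le_trans (leUr z' z) (leUl _ d))).
  + have [e [De hde hde']] := hD d d' Dd Dd'.
    right; exists e; split => //; rewrite leUx; apply/andP; split.
      exact: (le_trans hx (leU2 (leUl z z') hde)).
    exact: (le_trans hy (leU2 (leUr z' z) hde')).
- exact: lexx.
- by move=> x y hx hxy; apply: le_trans hxy.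
- by move=> x y hx hy; rewrite lexI hx hy.
- move=> y [z [hz [h|[d [Dd h]]]]] ht.
    by apply: (pr_top hzI); apply: (pr_down hzI hz); apply: le_trans ht h.
  have e : z `|` d = \top by apply/le_anti; rewrite lex1 (le_trans ht h).
  have e2 : neg d `&` neg z = \bot by rewrite meetC -negJ e neg_top.
  have : neg z <= ff d by rewrite ffE; apply/starP.
  by move=> hle; apply: hz; apply: (pr_down hI (hDI d Dd)).
exists K; split => //.
  by move=> a ha; apply: h1; exists a; split => //; left.
move=> d Dd; apply: h1; exists \bot; split; first exact: (pr_bot hzI).
by right; exists d; split => //; rewrite join0x.
Qed.

Fixpoint Rp (n : nat) (I K : L -> Prop) : Prop :=
  match n with
  | 0 => I = K
  | m.+1 => exists M, [/\ prime_ideal M, Rl I M & Rp m M K]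
  end.

Lemma Rp_prime n I K : prime_ideal I -> Rp n I K -> prime_ideal K.
Proof.
elim: n I => [|n IH] I hI /=; first by move=> <-.
by move=> [M [hM _ hR]]; apply: (IH M).
Qed.

Lemma Rp_easy n I K a : prime_ideal I -> Rp n I K -> K a -> I (iter n ff a).
Proof.
elim: n I => [|n IH] I hI /=; first by move=> ->.
move=> [M [hM hIM hR]] hKa; apply: (Rl_easy hM hIM); exact: (IH M).
Qed.

Lemma Rp_snoc n I K K' : Rp n I K -> Rl K K' -> prime_ideal K' -> Rp n.+1 I K'.
Proof.
elim: n I => [|n IH] I /=.
  by move=> -> hR hK'; exists K'.
by move=> [M [hM hIM hR]] hKK' hK'; exists M; split => //; apply: IH.
Qed.

Lemma Rp_unsnoc n I K : prime_ideal I -> Rp n.+1 I K ->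
  exists M, [/\ prime_ideal M, Rp n I M & Rl M K].
Proof.
elim: n I => [|n IH] I hI.
  by move=> [M [hM hIM /= <-]]; exists I.
move=> [M1 [hM1 hIM1 hR]].
have [M [hM hR' hMK]] := IH M1 hM1 hR.
by exists M; split => //; exists M1.
Qed.

Lemma Rl_zetaK K : Rl (zt K) K.
Proof. by move=> a; rewrite zetaK. Qed.

Lemma Rp_pad n I K : prime_ideal K -> Rp n I K -> Rp n.+2 I K.
Proof.
move=> hK h; apply: (Rp_snoc (Rp_snoc h (@Rl_zeta K) (zeta_prime hK))) => //.
exact: Rl_zetaK.
Qed.

Lemma chain n I D : prime_ideal I -> directed D ->
  (forall d, D d -> I (iter n ff d)) ->
  exists K, [/\ prime_ideal K, Rp n I K & forall d, D d -> K d].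
Proof.
elim: n I => [|n IH] I hI hD hDI; first by exists I.
pose D' t := exists d, D d /\ t = iter n ff d.
have hD' : directed D'.
  move=> _ _ [d1 [h1 ->]] [d2 [h2 ->]].
  have [e [De h1e h2e]] := hD d1 d2 h1 h2.
  by exists (iter n ff e); split; [exists e | apply: iter_mono | apply: iter_mono].
have hD'I : forall t, D' t -> I (ff t) by move=> _ [d [Dd ->]]; exact: hDI.
have [M [hM hIM hMD]] := step hI hD' hD'I.
have hMD' : forall d, D d -> M (iter n ff d) by move=> d Dd; apply: hMD; exists d.
have [K [hK hR hKD]] := IH M hM hD hMD'.
by exists K; split => //; exists M.
Qed.

Lemma same_ptE (I J : L -> Prop) : same_pt I J -> I = J.
Proof. by move=> h; apply: pt_ext. Qed.

Lemma walk_le m n (A B : L -> Prop) : (m <= n)%N -> walk m A B -> walk n A B.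
Proof.
move=> /subnK <-; elim: (n - m) => [|k IH] h; first by rewrite add0n.
by rewrite addSn /=; left; apply: IH.
Qed.

Lemma comp_zeta (K B : L -> Prop) : comparable_pt K B -> comparable_pt (zt K) (zt B).
Proof. by case=> h; [right|left]; apply: zeta_anti. Qed.

Lemma walk_zeta n (A B : L -> Prop) : walk n A B -> walk n (zt A) (zt B).
Proof.
elim: n B => [|n IH] B /=.
  by move=> /same_ptE ->.
case=> [h|[K [hK [hw hc]]]]; first by left; apply: IH.
right; exists (zt K); split; first exact: zeta_prime.
by split; [apply: IH | apply: comp_zeta].
Qed.

Lemma walk_cons n (A M B : L -> Prop) : prime_ideal A -> comparable_pt A M ->
  prime_ideal M -> walk n M B -> walk n.+1 A B.
Proof.
move=> hA hAM hM; elim: n B => [|n IH] B /=.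
  move=> /same_ptE <-; right; exists A; split => //; split => //.
move=> [h|[K [hK [hw hc]]]]; first by left; apply: IH.
right; exists K; split => //; split => //; exact: IH.
Qed.

Lemma Rp_walk n (I K : L -> Prop) : prime_ideal I -> Rp n I K -> lzeta_le neg n I K.
Proof.
rewrite /lzeta_le; elim: n I => [|n IH] I hI /=.
  by move=> ->; left.
move=> [M [hM hIM hR]].
have hc : comparable_pt I (zt M) by right; apply: Rl_sub.
have hzM := zeta_prime hM.
case: (IH M hM hR) => h.
  by right; apply: (walk_cons hI hc hzM); apply: walk_zeta.
left; apply: (walk_cons hI hc hzM); rewrite -[K]zetaK; exact: walk_zeta.
Qed.

Lemma lzeta_zetal k (I J : L -> Prop) : lzeta_le neg k (zt I) J -> lzeta_le neg k I J.
Proof.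
rewrite /lzeta_le => -[h|h].
  by right; rewrite -[I]zetaK; apply: walk_zeta.
by left; rewrite -[I]zetaK -[J]zetaK; apply: walk_zeta.
Qed.

Lemma lzeta_zetal' k (I J : L -> Prop) : lzeta_le neg k I J -> lzeta_le neg k (zt I) J.
Proof. by move=> h; apply: lzeta_zetal; rewrite zetaK. Qed.

Lemma lzeta_zetar k (I J : L -> Prop) : lzeta_le neg k I (zt J) -> lzeta_le neg k I J.
Proof. by rewrite /lzeta_le zetaK => -[]; [right|left]. Qed.

Lemma lzeta_zetar' k (I J : L -> Prop) : lzeta_le neg k I J -> lzeta_le neg k I (zt J).
Proof. by move=> h; apply: lzeta_zetar; rewrite zetaK. Qed.

Definition Psi p (A W : L -> Prop) :=
  exists K, Rp p A K /\ W = (if odd p then zt K else K).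

Lemma walk_Psi k (A Z : L -> Prop) : prime_ideal A -> walk k A Z -> prime_ideal Z ->
  exists p, (p <= k.+1)%N /\ Psi p A Z.
Proof.
move=> hA; elim: k Z => [|k IH] Z /=.
  by move=> /same_ptE <- _; exists 0%N; split => //; exists A.
move=> [h|[M [hM [hw hc]]]] hZ.
  by have [p [hp hP]] := IH Z h hZ; exists p; split => //; apply: leqW.
have [p [hp [K [hR eM]]]] := IH M hw hM.
have hK := Rp_prime hA hR.
case op : (odd p) eM => eM; subst M.
- (* M = zt K *)
  case: hc => hc.
    exists p.+1; split => //; exists Z; split; last by rewrite /= op.
    exact: (Rp_snoc hR hc hZ).
  case: p hp op hR => [|p'] // hp op hR.
  have [K0 [hK0 hR0 hK0K]] := Rp_unsnoc hA hR.
  exists p'.+1; split; first exact: leqW.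
  exists (zt Z); split; last by rewrite op zetaK.
  apply: (Rp_snoc hR0 _ (zeta_prime hZ)); apply: zeta_anti => a /hc.
  exact: Rl_sub.
- (* M = K *)
  case: hc => hc.
    case: p hp op hR => [|p'] hp op hR.
      exists 2%N; split => //; exists Z; split => //=.
      move: hR => /= eA; subst K.
      exists (zt A); split; [exact: zeta_prime | exact: Rl_zeta | ].
      by exists Z; split => //; exact: sub_Rl.
    have [K0 [hK0 hR0 hK0K]] := Rp_unsnoc hA hR.
    exists p'.+1; split; first exact: leqW.
    exists Z; split; last by rewrite op.
    by apply: (Rp_snoc hR0 _ hZ) => a /hK0K /hc.
  exists p.+1; split => //; exists (zt Z); split; last by rewrite /= op zetaK.
  by apply: (Rp_snoc hR _ (zeta_prime hZ)); apply: zeta_anti.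
Qed.

Lemma lzeta_Rp n (A Z : L -> Prop) : prime_ideal A -> prime_ideal Z -> lzeta_le neg n A Z ->
  exists m K, [/\ (m <= n.+1)%N, Rp m A K & forall a, Z a -> K a].
Proof.
move=> hA hZ [h|h].
  have [p [hp [K [hR eZ]]]] := walk_Psi hA h hZ.
  case op : (odd p) eZ => eZ; subst Z.
    case: p hp op hR => [|p'] // hp op hR.
    have [K0 [hK0 hR0 hK0K]] := Rp_unsnoc hA hR.
    exists p', K0; split => //; first exact: ltnW.
    exact: Rl_sub.
  by exists p, K.
have [p [hp [K [hR eZ]]]] := walk_Psi hA h (zeta_prime hZ).
case op : (odd p) eZ => eZ.
  exists p, K; split => //.
  by rewrite -[Z]zetaK eZ zetaK.
case: p hp op hR => [|p'] hp op hR.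
  move: hR => /= eA.
  exists 1%N, Z; split => //; exists Z; split => //.
  by rewrite eA -eZ; exact: Rl_zetaK.
have [K0 [hK0 hR0 hK0K]] := Rp_unsnoc hA hR.
exists p', K0; split => //; first exact: ltnW.
by move=> a; rewrite -[Z]zetaK eZ; apply: Rl_sub.
Qed.

Lemma final_pad n m x (P : L -> Prop) : prime_ideal P -> (m <= n.+1)%N ->
  P (iter m ff x) -> P (iter n ff (bb x)).
Proof.
move=> hP.
have top : P (iter n.+1 ff x) -> P (iter n ff (bb x)).
  by rewrite iterSr => h; apply: (pr_down hP h); apply: iter_mono; exact: leIr.
have mid : P (iter n ff x) -> P (iter n ff (bb x)).
  by move=> h; apply: (pr_down hP h); apply: iter_mono; exact: leIl.
suff : forall k m, (n.+1 - m <= k)%N -> (m <= n.+1)%N -> P (iter m ff x) ->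
  P (iter n ff (bb x)) by move=> h hm; apply: (h (n.+1 - m)%N).
elim=> [|k IH] m' hk hm hPm.
  have e : m' = n.+1 by lia.
  by subst m'; apply: top.
have [e|ne] := eqVneq m' n.+1; first by subst m'; apply: top.
have [e|ne'] := eqVneq m' n; first by subst m'; apply: mid.
apply: (IH m'.+2); [lia | lia | ].
by apply: (pr_down hP hPm); apply: iter_pad.
Qed.

Lemma width_range n : zeta_width neg n -> pm_range star neg n.
Proof.
move=> hw x; change (iter n ff (bb x) = iter n.+1 ff (bb x)).
apply/le_anti/andP; split; last exact: iter_bb_dec.
case: (pselect (iter n ff (bb x) <= iter n.+1 ff (bb x))) => // hn; exfalso.
have [I [hI [hI1 hI0]]] := separation hn.
have hDd : directed (eq (bb x)).
  by move=> _ _ <- <-; exists (bb x); split.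
have [K [hK hR hKb]] := chain hI hDd (fun d (e : bb x = d) => eq_ind _ (fun d => I (iter n.+1 ff d)) hI1 _ e).
suff [q [Z [hq hZ hRZ hZx]]] : exists q Z, [/\ (q <= n.+2)%N, prime_ideal Z, Rp q I Z & Z x].
  have hl := Rp_walk hI hRZ.
  have hl' := hw I Z hI hZ (ex_intro _ q hl).
  have [m [K2 [hm hR2 hZK2]]] := lzeta_Rp hI hZ hl'.
  have hIm := Rp_easy hI hR2 (hZK2 x hZx).
  by apply: hI0; exact: (final_pad hI hm hIm).
have := hKb _ erefl; rewrite /bb => /(pr_meet hK) [hx|hfx].
  by exists n.+1, K; split.
have hDx : directed (eq x) by move=> _ _ <- <-; exists x; split.
have [K' [hK' hR' hK'x]] := step hK hDx (fun d (e : x = d) => eq_ind _ (fun d => K (ff d)) hfx _ e).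
exists n.+2, K'; split => //; last exact: hK'x.
exact: (Rp_snoc hR hR' hK').
Qed.

Definition Maxp (P : L -> Prop) :=
  forall K, prime_ideal K -> (forall a, P a -> K a) -> K = P.

Lemma diff_elt (A B : L -> Prop) : (forall a, A a -> B a) -> A <> B ->
  exists y, B y /\ ~ A y.
Proof.
move=> hAB hne; apply: nnpp => hn; apply: hne; apply: pt_ext => a; split => //.
  exact: hAB.
by move=> hb; apply: nnpp => ha; apply: hn; exists a.
Qed.

Hypothesis hV : forall x y : L, x `&` neg (ff x) <= y `|` star y.

Lemma no_chain (A B C : L -> Prop) : prime_ideal A -> prime_ideal B -> prime_ideal C ->
  (forall a, A a -> B a) -> (forall a, B a -> C a) -> A <> B -> B <> C -> False.
Proof.
move=> hA hB hC hAB hBC nAB nBC.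
have [y [By nAy]] := diff_elt hAB nAB.
have [x [Cx nBx]] := diff_elt hBC nBC.
have hy : B (y `|` star y).
  apply: (pr_join hB) => //; apply: hAB.
  have := pr_bot hA; rewrite -(meet_star y) => /(pr_meet hA) [] //.
have hzC := zeta_prime hC.
have hzC1 : zt C (ff x).
  have := pr_bot hzC; rewrite -(meet_star (neg x)) => /(pr_meet hzC) [] //.
  by rewrite /zeta negK.
have hzB : zt B (ff x) by apply: (zeta_anti hBC).
have := pr_down hB hy (hV x y) => /(pr_meet hB) [] //.
Qed.

Lemma max_or (P : L -> Prop) : prime_ideal P -> Maxp P \/ Maxp (zt P).
Proof.
move=> hP; case: (pselect (Maxp P)) => hm; [by left | right].
move=> K' hK' hsub; apply: nnpp => hne; apply: hm => K hK hPK.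
apply: nnpp => hKP.
apply: (@no_chain (zt K') P K) => //.
- exact: zeta_prime.
- by move=> a; rewrite -[P]zetaK; apply: zeta_anti.
- by move=> e; apply: hne; rewrite -e zetaK.
- by move=> e; apply: hKP.
Qed.

Lemma lzeta_mono m n (I J : L -> Prop) : (m <= n)%N -> lzeta_le neg m I J -> lzeta_le neg n I J.
Proof. by move=> h [h1|h1]; [left|right]; apply: walk_le h h1. Qed.

Lemma range_stab n m x (P : L -> Prop) : pm_range star neg n -> prime_ideal P ->
  P (iter m ff (bb x)) -> P (iter n ff (bb x)).
Proof.
move=> hr hP hm; case: (leqP m n) => hmn.
  by apply: (pr_down hP hm); apply: iter_bb_decn.
suff -> : iter n ff (bb x) = iter m ff (bb x) by [].
move: hmn => /ltnW /subnK <-; elim: (m - n) => [|k IH]; first by rewrite add0n.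
by rewrite addSn iterS -IH -iterS; exact: (hr x).
Qed.

Lemma finish_max q n (I J : L -> Prop) : prime_ideal I -> Maxp I -> Rp q (zt I) J ->
  (q <= n.+1)%N -> lzeta_le neg n I J.
Proof.
move=> hI hmax; case: q => [|q] /=.
  move=> e _; right; apply: (@walk_le 0) => //=; by rewrite -e zetaK.
move=> [M [hM hzM hR]] hq.
have eM : M = I by apply: hmax => // a Ia; apply: hzM; rewrite zetaK.
subst M; rewrite ltnS in hq; apply: (lzeta_mono hq); exact: Rp_walk.
Qed.

Lemma core_range n (I J : L -> Prop) : pm_range star neg n ->
  prime_ideal I -> prime_ideal J -> Maxp I -> Maxp J ->
  (exists k, lzeta_le neg k I J) -> lzeta_le neg n I J.
Proof.
move=> hr hI hJ mI mJ [k hk].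
have hzI := zeta_prime hI.
have [m [K [_ hR hJK]]] := lzeta_Rp hzI hJ (lzeta_zetal' hk).
have hb : forall x, J x -> zt I (iter n ff (bb x)).
  move=> x Jx; apply: (@range_stab n m x _ hr hzI).
  apply: (pr_down hzI (Rp_easy hzI hR (hJK x Jx))); apply: iter_mono; exact: leIl.
pose D t := exists x, J x /\ t = bb x.
have hD : directed D.
  move=> _ _ [x1 [J1 ->]] [x2 [J2 ->]].
  exists (bb (x1 `|` x2)); split; first by exists (x1 `|` x2); split => //; apply: (pr_join hJ).
    by apply: bb_mono; exact: leUl.
  by apply: bb_mono; exact: leUr.
have hDb : forall t, D t -> zt I (iter n ff t) by move=> _ [x [Jx ->]]; exact: hb.
have [K1 [hK1 hR1 hK1D]] := chain hzI hD hDb.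
suff [q [hq hRq]] : exists q, (q <= n.+1)%N /\ Rp q (zt I) J.
  exact: (finish_max hI mI hRq hq).
case: (pselect (forall x, J x -> K1 x)) => hall.
  have e : K1 = J by apply: mJ.
  by exists n; split => //; rewrite -e.
have [x0 [Jx0 nK]] : exists x0, J x0 /\ ~ K1 x0.
  by apply: nnpp => hn; apply: hall => x Jx; apply: nnpp => nk; apply: hn; exists x.
have hf : forall x, J x -> K1 (ff x).
  move=> x Jx.
  have : K1 (bb (x `|` x0)) by apply: hK1D; exists (x `|` x0); split => //; apply: (pr_join hJ).
  move=> /(pr_meet hK1) [h|h].
    by exfalso; apply: nK; apply: (pr_joinr hK1 h).
  by apply: (pr_down hK1 h); apply: ff_mono; exact: leUl.
have hJd : directed J.
  move=> d1 d2 h1 h2; exists (d1 `|` d2); split; [exact: (pr_join hJ) | exact: leUl | exact: leUr].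
have [K2 [hK2 hR2 hK2J]] := step hK1 hJd hf.
have e : K2 = J by apply: mJ.
by exists n.+1; split => //; rewrite -e; apply: (Rp_snoc hR1 hR2 hK2).
Qed.

Lemma range_width n : pm_range star neg n -> zeta_width neg n.
Proof.
move=> hr I J hI hJ hk.
have hzI := zeta_prime hI; have hzJ := zeta_prime hJ.
case: (max_or hI) => mI; case: (max_or hJ) => mJ.
- exact: core_range.
- apply: lzeta_zetar; apply: core_range => //.
  by case: hk => k h; exists k; apply: lzeta_zetar'.
- apply: lzeta_zetal; apply: core_range => //.
  by case: hk => k h; exists k; apply: lzeta_zetal'.
- apply: lzeta_zetal; apply: lzeta_zetar; apply: core_range => //.
  by case: hk => k h; exists k; apply: lzeta_zetar'; apply: lzeta_zetal'.
Qed.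

End Alg.


Unset Implicit Arguments.
Theorem corollary3p8 (disp : Order.disp_t) (L : tbDistrLatticeType disp)
  (star neg : L -> L) (hpm : is_pm_algebra star neg) (hreg : pm_regular star neg)
  (n : nat) :
  pm_range star neg n <-> zeta_width neg n.
Proof.
split; first exact: (range_width hpm (regular_V hpm hreg)).
exact: (width_range hpm).
Qed.
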